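(* If $X$ is a compact metric space and $T:X\to X$ is continuous, then for the system of coefficients $c_S^n=2^{-n}$, $$\lim_{\varepsilon\to0^+}\operatorname{Asc}_\varepsilon(X,T)=\lim_{\varepsilon\to0^+}\operatorname{Asc}'_\varepsilon(X,T)=h_{\mathrm{top}}(X,T).$$
   Context: $n^*=\{0,\dots,n-1\}$; for $S\subset n^*$, $r(S,\varepsilon)$ is the minimum cardinality of an $(S,\varepsilon)$-spanning set ($F$ such that every $x$ has $y\in F$ with $d(T^ix,T^iy)\le\varepsilon$ for all $i\in S$) and $s(S,\varepsilon)$ the maximum cardinality of an $(S,\varepsilon)$-separated set ($E$ such that distinct $x,y\in E$ have some $i\in S$ with $d(T^ix,T^iy)>\varepsilon$). $\operatorname{Asc}_\varepsilon(X,T)=\limsup_n\frac1n\sum_{S\subset n^*}c_S^n\log r(S,\varepsilon)$ and $\operatorname{Asc}'_\varepsilon(X,T)=\limsup_n\frac1n\sum_{S\subset n^*}c_S^n\log s(S,\varepsilon)$. $h_{\mathrm{top}}$ is topological entropy. *)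

(* Defs.v *)
From HB Require Import structures.
From mathcomp Require Import all_boot all_order all_algebra.
From mathcomp Require Import all_classical all_reals all_analysis.
Set Implicit Arguments. Unset Strict Implicit. Unset Printing Implicit Defensive.
Import Order.TTheory GRing.Theory Num.Theory.
Import numFieldNormedType.Exports.
Local Open Scope classical_set_scope.
Local Open Scope ring_scope.

Section Defs.
Context {R : realType} {X : metricType R} (T : X -> X).

Local Notation d := (@mdist R X).

Definition spanning (n : nat) (S : {set 'I_n}) (eps : R) (F : seq X) : Prop :=
  forall x : X, exists2 y, y \in F &
    forall i : 'I_n, i \in S -> d (iter i T x) (iter i T y) <= eps.

Definition separated (n : nat) (S : {set 'I_n}) (eps : R) (E : seq X) : Prop :=
  uniq E /\ forall x y, x \in E -> y \in E -> x != y ->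
    exists2 i : 'I_n, i \in S & eps < d (iter i T x) (iter i T y).

Definition spanning_card (n : nat) (S : {set 'I_n}) (eps : R) : pred nat :=
  fun k => `[< exists F : seq X, size F = k /\ spanning S eps F >].

Definition separated_card (n : nat) (S : {set 'I_n}) (eps : R) : pred nat :=
  fun k => `[< exists E : seq X, size E = k /\ separated S eps E >].

(* r(S,eps): minimal cardinality of an (S,eps)-spanning set
   (default 0 if none is finite; never happens for compact X). *)
Definition r_span n (S : {set 'I_n}) (eps : R) : nat :=
  match pselect (exists k, spanning_card S eps k) with
  | left h => ex_minn h
  | right _ => 0%N
  end.

Lemma separated_card0 n (S : {set 'I_n}) eps : exists k, separated_card S eps k.
Proof.
exists 0%N; apply/asboolP; exists [::]; split; first by [].
split; first by [].
by move=> x y; rewrite in_nil.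
Qed.

(* s(S,eps): maximal cardinality of an (S,eps)-separated set
   (default 0 if unbounded; never happens for compact X). *)
Definition s_sep n (S : {set 'I_n}) (eps : R) : nat :=
  match pselect (exists m, forall k, separated_card S eps k -> (k <= m)%N) with
  | left h => let: exist m hm := cid h in
              @ex_maxn (separated_card S eps) m (separated_card0 S eps) hm
  | right _ => 0%N
  end.

Definition Asc_n (eps : R) (n : nat) : R :=
  n%:R^-1 * \sum_(S : {set 'I_n}) (2%:R ^- n) * ln (r_span S eps)%:R.

Definition Asc'_n (eps : R) (n : nat) : R :=
  n%:R^-1 * \sum_(S : {set 'I_n}) (2%:R ^- n) * ln (s_sep S eps)%:R.

Definition Asc (eps : R) : \bar R := limn_esup (fun n => (Asc_n eps n)%:E).
Definition Asc' (eps : R) : \bar R := limn_esup (fun n => (Asc'_n eps n)%:E).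

Definition htop_eps (eps : R) : \bar R :=
  limn_esup (fun n => (n%:R^-1 * ln (r_span [set: 'I_n] eps)%:R)%:E).

Definition htop : \bar R := lim (htop_eps eps @[eps --> 0^'+]).

End Defs.

(* Main.v *)
Require Import Defs.
From HB Require Import structures.
From mathcomp Require Import all_boot all_order all_algebra.
From mathcomp Require Import all_classical all_reals all_analysis.
Import Order.TTheory GRing.Theory Num.Theory.
Import numFieldNormedType.Exports.
Local Open Scope classical_set_scope.
Local Open Scope ring_scope.
Set Implicit Arguments. Unset Strict Implicit. Unset Printing Implicit Defensive.
From mathcomp Require Import zify.
Section S1.
Context {R : realType} {X : metricType R} (T : X -> X).
Local Notation d := (@mdist R X).

Lemma ln_nat_ge0 (k : nat) : 0 <= ln (k%:R : R).
Proof.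
case: k => [|k]; first by rewrite ln0.
by apply: ln_ge0; rewrite ler1n.
Qed.

Lemma ln_nat_le (a b : nat) : (a <= b)%N -> ln (a%:R : R) <= ln b%:R.
Proof.
case: a => [|a] ab; first by rewrite ln0 // ln_nat_ge0.
rewrite ler_ln ?ler_nat // posrE ltr0n //; exact: leq_ltn_trans ab.
Qed.

Lemma r_span_le n (S : {set 'I_n}) e F : spanning T S e F -> (r_span T S e <= size F)%N.
Proof.
move=> sp; rewrite /r_span; case: pselect => [h|[]]; last first.
  by exists (size F); apply/asboolP; exists F.
by case: ex_minnP => m _; apply; apply/asboolP; exists F.
Qed.

Lemma r_span_spec n (S : {set 'I_n}) e : (exists F, spanning T S e F) ->
  exists F, size F = r_span T S e /\ spanning T S e F.
Proof.
move=> [F sp]; rewrite /r_span; case: pselect => [h|[]]; last first.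
  by exists (size F); apply/asboolP; exists F.
by case: ex_minnP => m /asboolP.
Qed.

Definition part n (S : {set 'I_n}) e m := exists phi : X -> nat,
  (forall x, (phi x < m)%N) /\ (forall x y, phi x = phi y ->
     forall i : 'I_n, i \in S -> d (iter i T x) (iter i T y) <= e).

Definition part0 e m := exists phi : X -> nat,
  (forall x, (phi x < m)%N) /\ (forall x y, phi x = phi y -> d x y <= e).

Lemma part_r n (S : {set 'I_n}) e m : part S e m -> (r_span T S e <= m)%N.
Proof.
move=> [phi [phim phie]].
pose g (c : nat) : option X := match pselect (exists x, phi x = c) with
  | left h => Some (proj1_sig (cid h)) | right _ => None end.
pose F := pmap g (iota 0 m).
apply: (leq_trans (r_span_le (F := F) _)).
  move=> x; case gE: (g (phi x)) => [y|]; last first.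
    by move: gE; rewrite /g; case: pselect => // -[]; exists x.
  have yF : y \in F.
    rewrite mem_pmap; apply/mapP; exists (phi x) => //.
    by rewrite mem_iota add0n phim.
  exists y => //; apply: phie.
  move: gE; rewrite /g; case: pselect => // h [<-].
  by case: (cid h).
rewrite size_pmap; apply: leq_trans (count_size _ _) _.
by rewrite size_iota.
Qed.

Lemma span_part n (S : {set 'I_n}) e F : spanning T S e F -> part S (e + e) (size F).
Proof.
move=> sp.
have h x : exists y, y \in F /\ forall i : 'I_n, i \in S -> d (iter i T x) (iter i T y) <= e.
  by case: (sp x) => y yF hy; exists y.
pose c x := proj1_sig (cid (h x)).
have cP x : c x \in F /\ forall i : 'I_n, i \in S -> d (iter i T x) (iter i T (c x)) <= e.
  by rewrite /c; case: (cid (h x)).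
exists (fun x => index (c x) F); split.
  by move=> x; rewrite index_mem; case: (cP x).
move=> x y hxy i iS.
have cxy : c x = c y.
  case: (cP x) => cx _; case: (cP y) => cy _.
  by rewrite -(nth_index x cx) hxy nth_index.
apply: le_trans (metric_triangle _ (iter i T (c x)) _) _.
apply: lerD; first by case: (cP x) => _; apply.
by rewrite metric_sym cxy; case: (cP y) => _; apply.
Qed.

Lemma part_mul n (A B : {set 'I_n}) e m1 m2 : part A e m1 -> part B e m2 ->
  part (A :|: B) e (m1 * m2).
Proof.
move=> [f [fm fe]] [g [gm ge]].
exists (fun x => f x * m2 + g x)%N; split.
  move=> x; apply: (@leq_trans ((f x).+1 * m2)); first by rewrite mulSn addnC ltn_add2r.
  by rewrite leq_mul2r fm orbT.
move=> x y hxy.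
have m2p : (0 < m2)%N by apply: leq_ltn_trans (gm x).
have gxy : g x = g y.
  have := congr1 (fun z => z %% m2)%N hxy.
  by rewrite /= !modnMDl !modn_small.
have fxy : f x = f y.
  have := congr1 (fun z => z %/ m2)%N hxy.
  by rewrite /= !divnMDl // !divn_small // !addn0.
move=> i; rewrite inE => /orP[iA|iB]; [exact: fe | exact: ge].
Qed.

Lemma part_sub n (A B : {set 'I_n}) e m : A \subset B -> part B e m -> part A e m.
Proof.
move=> /fintype.subsetP AB [f [fm fe]]; exists f; split => // x y hxy i iA.
exact: fe (AB _ iA).
Qed.

Lemma part_set0 n e : part (finset.set0 : {set 'I_n}) e 1.
Proof. by exists (fun _ => 0%N); split => // x y _ i; rewrite finset.in_set0. Qed.

Lemma part_set1 n (i : 'I_n) e m : part0 e m -> part [set i] e m.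
Proof.
move=> [f [fm fe]]; exists (fun x => f (iter i T x)); split => // x y hxy j.
by rewrite inE => /eqP ->; apply: fe.
Qed.

Lemma part_card n (B : {set 'I_n}) e m : part0 e m -> part B e (m ^ #|B|).
Proof.
move=> p0; have [k cB] : exists k, #|B| = k by eexists.
rewrite cB; elim: k B cB => [|k IH] B cB.
  by move/eqP: cB; rewrite cards_eq0 => /eqP ->; exact: part_set0.
have [i iB] : exists i, i \in B.
  by apply/set0Pn; rewrite -card_gt0 cB.
have -> : B = [set i] :|: (B :\ i) by rewrite finset.setD1K.
rewrite expnS; apply: part_mul; first exact: part_set1.
by apply: IH; rewrite (cardsD1 i B) iB in cB; case: cB.
Qed.
End S1.
Section S2.
Context {R : realType} {X : metricType R} (T : X -> X).
Local Notation d := (@mdist R X).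

Lemma open_mball (x : X) e : open [set y | d x y < e].
Proof.
rewrite openE => y /= dy; rewrite /interior /=; apply/metricType_numDomainType.nbhs_mdistP.
exists (e - d x y) => /=; first by rewrite subr_gt0.
move=> z /= dz; apply: le_lt_trans (metric_triangle x y z) _.
by rewrite -ltrBrDl.
Qed.

Lemma net e : compact [set: X] -> 0 < e ->
  exists F : seq X, forall x, exists2 y, y \in F & d y x < e.
Proof.
move=> cpt e0; have ncov := (iffLR (compact_near_coveringP _)) cpt.
pose G := filter_from (@setT (seq X)) (fun s => [set t : seq X | {subset s <= t}]).
have FG : Filter G.
  apply: filter_from_filter; first by exists [::].
  move=> s1 s2 _ _; exists (s1 ++ s2) => // t /= st; split => y ys; apply: st;
    by rewrite mem_cat ys ?orbT.
have := ncov (seq X) G (fun t x => exists2 y, y \in t & d y x < e) FG.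
case.
- move=> x _; exists ([set x' | d x x' < e], [set t : seq X | x \in t]) => /=.
    split; last by exists [:: x] => // t /=; apply; rewrite mem_seq1.
    by apply/metricType_numDomainType.nbhs_mdistP; exists e.
  by move=> [x' t] /= [dx xt]; exists x.
- move=> s _ sub; exists s => x; exact: (sub s (fun _ h => h) x I).
Qed.

Lemma cont_iter j : continuous T -> continuous (iter j T).
Proof.
move=> cT; elim: j => [|j IH].
  by move=> x; apply: cvg_id.
move=> x; apply: (@continuous_comp _ _ _ (iter j T) T x); [exact: IH | exact: cT].
Qed.

Lemma near_all_lt {I : Type} (F : set_system I) (FF : Filter F) (P : nat -> I -> Prop) k :
  (forall j, \forall z \near F, P j z) ->
  \forall z \near F, forall j, (j < k)%N -> P j z.
Proof.
move=> h; elim: k => [|k IH]; first by apply: filterE => z j.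
apply: filterS (filterI IH (h k)) => z [h1 h2] j; rewrite ltnS leq_eqVlt.
by case/orP => [/eqP -> //|]; exact: h1.
Qed.

Lemma unif_cont k e : compact [set: X] -> continuous T -> 0 < e ->
  exists2 del, 0 < del & forall x y, d x y <= del ->
    forall j, (j < k)%N -> d (iter j T x) (iter j T y) <= e.
Proof.
move=> cpt cT e0; have ncov := (iffLR (compact_near_coveringP _)) cpt.
have e20 : 0 < e / 2 by rewrite divr_gt0.
pose P := (fun del x => forall y, d x y <= del ->
    forall j, (j < k)%N -> d (iter j T x) (iter j T y) <= e).
have hdel : \forall del \near 0^'+, [set: X] `<=` P del.
  apply: ncov => x _.
  have : \forall z \near x, forall j, (j < k)%N -> d (iter j T x) (iter j T z) < e / 2.
    apply: near_all_lt => j.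
    exact: (metricType_numDomainType.cvgr_dist_lt (cont_iter (j:=j) cT (x:=x)) e20).
  move=> /metricType_numDomainType.nbhs_mdistP [eta /= eta0 Heta].
  have eta20 : 0 < eta / 2 by rewrite divr_gt0.
  exists ([set x' | d x x' < eta / 2], [set del | del < eta / 2]) => /=.
    split; first by apply/metricType_numDomainType.nbhs_mdistP; exists (eta / 2).
    exact: nbhs_right_lt.
  move=> [x' del] /= [dx dl] y dy j jk.
  have eh : eta / 2 < eta by rewrite ltr_pdivrMr // ltr_pMr // ltr1n.
  have h1 := Heta x' (lt_trans dx eh) j jk.
  have h2 : d x y < eta.
    apply: le_lt_trans (metric_triangle x x' y) _.
    rewrite [eta]splitr; apply: ltrD => //; exact: le_lt_trans dy dl.
  have h3 := Heta y h2 j jk.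
  apply: ltW; apply: le_lt_trans (metric_triangle _ (iter j T x) _) _.
  by rewrite [e]splitr metric_sym; apply: ltrD.
have [del0 [Hd1 Hd2]] := filter_ex (filterI (nbhs_right_gt (0:R)) hdel).
by exists del0 => // x y; exact: (Hd2 x I y).
Qed.

Lemma exists_spanning n (S : {set 'I_n}) e : compact [set: X] -> continuous T -> 0 < e ->
  exists F, spanning T S e F.
Proof.
move=> cpt cT e0; have [del del0 Hd] := unif_cont n cpt cT e0.
have [F HF] := net cpt del0; exists F => x.
have [y yF dyx] := HF x; exists y => // i _.
by apply: Hd (ltn_ord i); rewrite metric_sym ltW.
Qed.

Lemma exists_part0 e : compact [set: X] -> continuous T -> 0 < e ->
  exists m, part0 (X:=X) (e + e) m.
Proof.
move=> cpt cT e0; have [F sp] := exists_spanning [set: 'I_1] cpt cT e0.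
have [f [fm fe]] := span_part sp.
exists (size F), f; split => // x y hxy.
exact: (fe x y hxy ord0 (finset.in_setT _)).
Qed.
End S2.
Section S3.
Context {R : realType} {X : metricType R} (T : X -> X).
Local Notation d := (@mdist R X).
Hypothesis cpt : compact [set: X].
Hypothesis cT : continuous T.

Lemma r_mono n (S : {set 'I_n}) e e' : 0 < e -> e <= e' ->
  (r_span T S e' <= r_span T S e)%N.
Proof.
move=> e0 ee'; have [F [<- sp]] := r_span_spec (exists_spanning S cpt cT e0).
apply: r_span_le => x; have [y yF hy] := sp x; exists y => // i iS.
exact: le_trans (hy i iS) ee'.
Qed.

Lemma r_subset n (A B : {set 'I_n}) e : 0 < e -> A \subset B ->
  (r_span T A e <= r_span T B e)%N.
Proof.
move=> e0 /fintype.subsetP AB; have [F [<- sp]] := r_span_spec (exists_spanning B cpt cT e0).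
apply: r_span_le => x; have [y yF hy] := sp x; exists y => // i iA.
exact: hy (AB _ iA).
Qed.

Lemma sep_le_span n (S : {set 'I_n}) e E F : Defs.separated T S (e + e) E ->
  spanning T S e F -> (size E <= size F)%N.
Proof.
move=> [uE sE] sp.
have h x : exists y, y \in F /\ forall i : 'I_n, i \in S -> d (iter i T x) (iter i T y) <= e.
  by case: (sp x) => y yF hy; exists y.
pose c x := proj1_sig (cid (h x)).
have cP x : c x \in F /\ forall i : 'I_n, i \in S -> d (iter i T x) (iter i T (c x)) <= e.
  by rewrite /c; case: (cid (h x)).
rewrite -(size_map c); apply: uniq_leq_size.
  rewrite map_inj_in_uniq // => x y xE yE cxy; apply/eqP; apply: contraT => xy.
  have [i iS lt] := sE x y xE yE xy.
  move: lt; rewrite ltNge => /negP [].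
  apply: le_trans (metric_triangle _ (iter i T (c x)) _) _.
  apply: lerD; first by case: (cP x) => _; apply.
  by rewrite metric_sym cxy; case: (cP y) => _; apply.
by move=> y /mapP [x _ ->]; case: (cP x).
Qed.

Lemma s_bounded n (S : {set 'I_n}) e : 0 < e ->
  exists m, forall k, separated_card T S e k -> (k <= m)%N.
Proof.
move=> e0; have e20 : 0 < e / 2 by rewrite divr_gt0.
have [F sp] := exists_spanning S cpt cT e20.
exists (size F) => k /asboolP [E [<- sE]].
by apply: sep_le_span sp; rewrite -splitr.
Qed.

Lemma s_spec n (S : {set 'I_n}) e : 0 < e ->
  separated_card T S e (s_sep T S e) /\
  forall k, separated_card T S e k -> (k <= s_sep T S e)%N.
Proof.
move=> e0; rewrite /s_sep; case: pselect => [h|[]]; last exact: s_bounded.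
by case: (cid h) => m hm; case: ex_maxnP.
Qed.

Lemma s_le_r n (S : {set 'I_n}) e : 0 < e -> (s_sep T S (e + e) <= r_span T S e)%N.
Proof.
move=> e0; have ee0 : 0 < e + e by rewrite addr_gt0.
have [/asboolP [E [<- sE]] _] := s_spec S ee0.
have [F [<- sp]] := r_span_spec (exists_spanning S cpt cT e0).
exact: sep_le_span sp.
Qed.

Lemma r_le_s n (S : {set 'I_n}) e : 0 < e -> (r_span T S e <= s_sep T S e)%N.
Proof.
move=> e0; have [/asboolP [E [<- [uE sE]]] smax] := s_spec S e0.
apply: r_span_le => x; apply: contrapT => nsp.
have xE : x \notin E.
  apply/negP => xE; apply: nsp; exists x => // i _; by rewrite mdistxx ltW.
have sep' : Defs.separated T S e (x :: E).
  split; first by rewrite /= xE.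
  have key y : y \in E -> exists2 i : 'I_n, i \in S & e < d (iter i T x) (iter i T y).
    move=> yE; apply: contrapT => H; apply: nsp; exists y => // i iS.
    by rewrite leNgt; apply/negP => lt; apply: H; exists i.
  move=> y z; rewrite !inE => /orP[/eqP ->|yE] /orP[/eqP ->|zE] yz.
  - by rewrite eqxx in yz.
  - exact: key.
  - have [i iS lt] := key y yE; exists i => //; by rewrite metric_sym.
  - exact: sE.
have := smax (size (x :: E)).
by rewrite ltnn => /(_ (asboolT (ex_intro _ (x :: E) (conj erefl sep')))).
Qed.

Lemma s_mono n (S : {set 'I_n}) e e' : 0 < e -> e <= e' ->
  (s_sep T S e' <= s_sep T S e)%N.
Proof.
move=> e0 ee'; have e'0 : 0 < e' by apply: lt_le_trans ee'.
have [/asboolP [E [<- [uE sE]]] _] := s_spec S e'0.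
have [_ smax] := s_spec S e0; apply: smax; apply/asboolP; exists E; split => //.
split => // x y xE yE xy; have [i iS lt] := sE x y xE yE xy; exists i => //.
exact: le_lt_trans lt.
Qed.
End S3.

Definition Aset n k (S : {set 'I_n}) : {set 'I_n} :=
  [set i : 'I_n | [exists s in S, (s <= i < s + k)%N]].

Definition Wset n k (i : 'I_n) : {set 'I_n} := [set s : 'I_n | (s <= i < s + k)%N].

Lemma Wset_card n k (i : 'I_n) : (k <= i.+1)%N -> (k <= #|Wset k i|)%N.
Proof.
move=> ki.
have hlt (j : 'I_k) : (i - j < n)%N by apply: leq_ltn_trans (leq_subr j i) (ltn_ord i).
pose f (j : 'I_k) : 'I_n := Ordinal (hlt j).
have finj : injective f.
  move=> j1 j2 /(congr1 val) /= h; apply: val_inj => /=.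
  have := ltn_ord j1; have := ltn_ord j2; lia.
have ck : #|f @: 'I_k| = k by rewrite card_imset // card_ord.
rewrite -{1}ck; apply: subset_leq_card; apply/fintype.subsetP => s /imsetP [j _ ->].
rewrite inE /=; have := ltn_ord j; move: ki; clear; move=> ki hj; apply/andP; split; lia.
Qed.

Lemma notA_powerset n k (i : 'I_n) :
  [set S : {set 'I_n} | i \notin Aset k S]%SET = powerset (~: Wset k i).
Proof.
apply/setP => S; rewrite !inE; apply/idP/idP.
  move=> h; apply/fintype.subsetP => s sS; rewrite !inE; apply: contra h => sw.
  by apply/existsP; exists s; rewrite sS.
move=> /fintype.subsetP sub; apply/negP => /existsP [s /andP [sS sw]].
by have := sub s sS; rewrite !inE sw.
Qed.

Lemma sum_lt_k n k c : (\sum_(i < n) (if (i < k)%N then c else 0) <= k * c)%N.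
Proof.
suff : (\sum_(i < n) (if (i < k)%N then c else 0) <= minn n k * c)%N.
  move=> h; apply: leq_trans h _; rewrite leq_mul2r geq_minr orbT //.
elim: n => [|n IH]; first by rewrite big_ord0.
rewrite big_ord_recr /=; case: ltnP => nk.
  have -> : minn n.+1 k = (minn n k).+1 by lia.
  by rewrite mulSn addnC leq_add2l.
have -> : minn n.+1 k = minn n k by lia.
by rewrite addn0.
Qed.

Lemma card_sumb (T : finType) (A : {set T}) : #|A| = (\sum_(x : T) (x \in A : nat))%N.
Proof. by rewrite -sum1_card big_mkcond /=; apply: eq_bigr => x _; case: (x \in A). Qed.

Lemma count_miss n k :
  ((\sum_(S : {set 'I_n}) #|~: Aset k S|) * 2 ^ k <= (k * 2 ^ k + n) * 2 ^ n)%N.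
Proof.
have -> : (\sum_(S : {set 'I_n}) #|~: Aset k S|) =
          \sum_(i < n) #|[set S : {set 'I_n} | i \notin Aset k S]%SET|.
  rewrite (eq_bigr (fun S => \sum_(i < n) (i \notin Aset k S : nat))); last first.
    by move=> S _; rewrite card_sumb; apply: eq_bigr => i _; rewrite inE.
  rewrite exchange_big /=; apply: eq_bigr => i _.
  by rewrite card_sumb; apply: eq_bigr => S _; rewrite inE.
rewrite big_distrl /=.
apply: (@leq_trans (\sum_(i < n) ((if (i < k)%N then 2 ^ k * 2 ^ n else 0) + 2 ^ n))).
  apply: leq_sum => i _; rewrite notA_powerset card_powerset cardsCs card_ord.
  have Wn : (#|Wset k i| <= n)%N by rewrite -[n in (_ <= n)%N]card_ord max_card.
  case: ltnP => ik.
    rewrite finset.setCK mulnC; apply: leq_trans (leq_addr _ _).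
    by rewrite leq_mul2l leq_exp2l ?leq_subr // orbT.
  have kW := Wset_card (ltnW (leq_ltn_trans ik (ltnSn i))).
  rewrite finset.setCK add0n -expnD leq_exp2l //; lia.
rewrite big_split /= sum_nat_const card_ord mulnDl leq_add2r.
by rewrite -mulnA; apply: sum_lt_k.
Qed.

Lemma card_setT n : #|{set 'I_n}| = (2 ^ n)%N.
Proof.
rewrite -cardsT; have -> : (finset.setT : {set {set 'I_n}}) = powerset (finset.setT : {set 'I_n}).
  by apply/setP => A; rewrite !inE finset.subsetT.
by rewrite card_powerset cardsT card_ord.
Qed.

Section S5.
Context {R : realType} {X : metricType R} (T : X -> X).
Local Notation d := (@mdist R X).
Hypothesis cpt : compact [set: X].
Hypothesis cT : continuous T.

Lemma key_nat n k e del M (S : {set 'I_n}) : 0 < del ->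
  (forall x y, d x y <= del -> forall j, (j < k)%N -> d (iter j T x) (iter j T y) <= e) ->
  part0 (X:=X) (e + e) M ->
  (r_span T (finset.setT : {set 'I_n}) (e + e) <= r_span T S del * M ^ #|~: Aset k S|)%N.
Proof.
move=> del0 Hd p0.
have [F [<- sp]] := r_span_spec (exists_spanning S cpt cT del0).
apply: part_r.
have -> : (finset.setT : {set 'I_n}) = Aset k S :|: ~: Aset k S by rewrite finset.setUCr.
apply: part_mul; last exact: part_card.
apply: span_part => x; have [y yF hy] := sp x; exists y => // i.
rewrite inE => /existsP [s /andP [sS /andP [si isk]]].
have -> : nat_of_ord i = ((i - s) + s)%N by rewrite subnK.
rewrite !iterD; apply: Hd; first exact: hy.
by rewrite ltn_subLR.
Qed.

Lemma ln_bound (b a M j : nat) : (b <= a * M ^ j)%N ->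
  ln (b%:R : R) <= ln a%:R + j%:R * ln M%:R.
Proof.
case: b => [|b] h.
  by rewrite ln0 // addr_ge0 ?ln_nat_ge0 // mulr_ge0 ?ln_nat_ge0.
have a0 : (0 < a)%N by case: a h => [|a]; rewrite ?mul0n.
case: j h => [|j] h.
  by rewrite mul0r addr0 ln_nat_le // -[a]muln1.
have M0 : (0 < M)%N by case: M h => [|M]; rewrite ?exp0n ?muln0.
apply: le_trans (ln_nat_le h) _.
rewrite natrM lnM ?posrE ?ltr0n ?expn_gt0 ?M0 // natrX lnXn ?ltr0n //.
by rewrite mulr_natl.
Qed.

Lemma sum_q n : \sum_(S : {set 'I_n}) (2%:R ^- n : R) = 1.
Proof.
rewrite sumr_const card_setT -[_ *+ (2 ^ n)]mulr_natr natrX mulVf //.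
Qed.

Lemma key_real n k e del M : 0 < del ->
  (forall x y, d x y <= del -> forall j, (j < k)%N -> d (iter j T x) (iter j T y) <= e) ->
  part0 (X:=X) (e + e) M -> (0 < n)%N -> (k * 2 ^ k <= n)%N ->
  n%:R^-1 * ln (r_span T (finset.setT : {set 'I_n}) (e + e))%:R
    <= Asc_n T del n + ln M%:R * (2 / 2%:R ^+ k).
Proof.
move=> del0 Hd p0 n0 kn.
set b := r_span T _ _.
pose q : R := 2%:R ^- n.
have q0 : 0 <= q by rewrite /q invr_ge0 exprn_ge0.
have h1 (S : {set 'I_n}) : ln (b%:R : R) <= ln (r_span T S del)%:R + (#|~: Aset k S|)%:R * ln M%:R.
  exact/ln_bound/key_nat.
have h2 : ln (b%:R : R) <= \sum_(S : {set 'I_n}) q * ln (r_span T S del)%:R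
           + ln M%:R * (q * (\sum_(S : {set 'I_n}) #|~: Aset k S|)%:R).
  have -> : ln (b%:R : R) = \sum_(S : {set 'I_n}) q * ln b%:R by rewrite -mulr_suml sum_q mul1r.
  rewrite natr_sum mulr_sumr mulr_sumr -big_split /=; apply: ler_sum => S _.
  by rewrite [ln M%:R * _]mulrCA -mulrDr ler_wpM2l // [ln M%:R * _]mulrC.
have h3 : q * (\sum_(S : {set 'I_n}) #|~: Aset k S|)%:R <= 2 * n%:R / 2%:R ^+ k.
  have cm := count_miss n k.
  have cm' : ((\sum_(S : {set 'I_n}) #|~: Aset k S|) * 2 ^ k <= (2 * n) * 2 ^ n)%N.
    apply: leq_trans cm _; rewrite leq_mul2r; apply/orP; right; lia.
  have pk : (0 : R) < 2%:R ^+ k by rewrite exprn_gt0.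
  rewrite ler_pdivlMr // /q mulrAC -mulrA ler_pdivrMl ?exprn_gt0 //.
  rewrite -!natrX -!natrM ler_nat mulnC [(2 ^ n * _)%N]mulnC. exact: cm'.
have n0' : (0 : R) < n%:R by rewrite ltr0n.
rewrite /Asc_n -/q; rewrite -(ler_pM2l n0') mulrA mulfV ?gt_eqF // mul1r.
rewrite mulrDr mulrA mulfV ?gt_eqF // mul1r.
apply: le_trans h2 _; rewrite lerD2l [n%:R * (ln M%:R * _)]mulrCA; apply: ler_wpM2l; first exact: ln_nat_ge0.
by apply: le_trans h3 _; rewrite mulrA [n%:R * _]mulrC.
Qed.
End S5.
Section S6.
Context {R : realType}.
Local Open Scope ereal_scope.

Lemma limsup_le (u v : nat -> R) (c : R) N : (forall n, (N <= n)%N -> (u n <= v n + c)%R) ->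
  limn_esup (fun n => (u n)%:E) <= limn_esup (fun n => (v n)%:E) + c%:E.
Proof.
move=> h; rewrite -leeBlDr //.
rewrite [X in _ <= X]/limn_esup limf_esupE; apply: le_ereal_inf_tmp => _ [V hV <-].
rewrite leeBlDr //.
have hW : \oo (V `&` [set n | (N <= n)%N]).
  by apply: filterI hV _; exists N => // n.
apply: le_trans (_ : ereal_sup ((fun n => (u n)%:E) @` (V `&` [set n | (N <= n)%N])) <= _).
  by rewrite /limn_esup limf_esupE; apply: ereal_inf_lbound; exists (V `&` [set n | (N <= n)%N]).
apply: ge_ereal_sup => _ [n [Vn Nn] <-].
apply: le_trans (_ : (v n)%:E + c%:E <= _); first by rewrite -EFinD lee_fin h.
by apply: leeD2r; apply: ereal_sup_ubound; exists n.
Qed.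

Lemma limsup_mono (u v : nat -> R) : (forall n, (u n <= v n)%R) ->
  limn_esup (fun n => (u n)%:E) <= limn_esup (fun n => (v n)%:E).
Proof.
move=> h; rewrite -[X in _ <= X]adde0; apply: (@limsup_le _ _ 0 0) => n _.
by rewrite addr0.
Qed.

Lemma limsup_ge0 (u : nat -> R) : (forall n, (0 <= u n)%R) -> 0 <= limn_esup (fun n => (u n)%:E).
Proof.
move=> h; apply: limf_esup_ge0; last by move=> n; rewrite lee_fin.
by move=> [N _ /(_ N (leqnn N))].
Qed.
End S6.

Lemma avg_mono {R : realType} n (f g : {set 'I_n} -> nat) : (forall S, (f S <= g S)%N) ->
  n%:R^-1 * \sum_(S : {set 'I_n}) (2%:R ^- n) * ln (f S)%:R
  <= n%:R^-1 * \sum_(S : {set 'I_n}) (2%:R ^- n) * ln (g S)%:R :> R.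
Proof.
move=> h; apply: ler_wpM2l; first by rewrite invr_ge0.
apply: ler_sum => S _; apply: ler_wpM2l; first by rewrite invr_ge0 exprn_ge0.
exact: ln_nat_le.
Qed.

Section S7.
Context {R : realType} {X : metricType R} (T : X -> X).
Local Notation d := (@mdist R X).
Hypothesis cpt : compact [set: X].
Hypothesis cT : continuous T.

Lemma Asc_le_Asc' e : 0 < e -> (Asc T e <= Asc' T e)%E.
Proof.
move=> e0; apply: limsup_mono => n; apply: avg_mono => S.
exact: r_le_s.
Qed.

Lemma Asc'_le_Asc e : 0 < e -> (Asc' T (e + e) <= Asc T e)%E.
Proof.
move=> e0; apply: limsup_mono => n; apply: avg_mono => S.
exact: s_le_r.
Qed.

Lemma Asc_le_htop e : 0 < e -> (Asc T e <= htop_eps T e)%E.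
Proof.
move=> e0; apply: limsup_mono => n.
apply: le_trans (avg_mono (g := fun _ => r_span T (finset.setT : {set 'I_n}) e) _) _.
  by move=> S; apply: r_subset => //; exact: finset.subsetT.
by rewrite -mulr_suml sum_q mul1r.
Qed.

Lemma Asc_noninc e e' : 0 < e -> e <= e' -> (Asc T e' <= Asc T e)%E.
Proof.
move=> e0 ee'; apply: limsup_mono => n; apply: avg_mono => S.
exact: r_mono.
Qed.

Lemma Asc'_noninc e e' : 0 < e -> e <= e' -> (Asc' T e' <= Asc' T e)%E.
Proof.
move=> e0 ee'; apply: limsup_mono => n; apply: avg_mono => S.
exact: s_mono.
Qed.

Lemma htop_noninc e e' : 0 < e -> e <= e' -> (htop_eps T e' <= htop_eps T e)%E.
Proof.
move=> e0 ee'; apply: limsup_mono => n; apply: ler_wpM2l; first by rewrite invr_ge0.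
exact/ln_nat_le/r_mono.
Qed.

Lemma htop_key e : 0 < e -> exists M, forall k, exists2 del, 0 < del &
  (htop_eps T (e + e) <= Asc T del + (ln M%:R * (2 / 2%:R ^+ k))%:E)%E.
Proof.
move=> e0; have [M p0] := exists_part0 cpt cT e0.
exists M => k; have [del del0 Hd] := unif_cont k cpt cT e0.
exists del => //; apply: (@limsup_le _ _ _ _ (k * 2 ^ k).+1) => n kn.
apply: key_real => //; first by apply: leq_trans kn.
exact: ltnW.
Qed.
End S7.

Lemma conv_noninc {R : realType} (f : R -> \bar R) :
  (forall e e', 0 < e -> e <= e' -> (f e' <= f e)%E) ->
  f x @[x --> 0^'+] --> ereal_sup (f @` [set` `]0, +oo[]).
Proof.
move=> h; apply: nonincreasing_at_right_cvge => //.
by move=> a b; rewrite !in_itv /= !andbT => a0 b0 ab; exact: h.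
Qed.

Lemma pos_itv {R : realType} (e : R) : [set` `]0, +oo[] e -> 0 < e.
Proof. by rewrite /= in_itv /= andbT. Qed.

Lemma itv_pos {R : realType} (e : R) : 0 < e -> [set` `]0, +oo[] e.
Proof. by rewrite /= in_itv /= andbT. Qed.

Theorem corollaryA14 (R : realType) (X : metricType R) (T : X -> X) :
  compact [set: X] -> continuous T ->
  (Asc T eps @[eps --> 0^'+] --> htop T) /\
  (Asc' T eps @[eps --> 0^'+] --> htop T).
Proof.
move=> cpt cT.
set I := [set` `]0, +oo[] : set R.
have cA := conv_noninc (fun e e' e0 ee' => Asc_noninc cpt cT e0 ee').
have cA' := conv_noninc (fun e e' e0 ee' => Asc'_noninc cpt cT e0 ee').
have cH := conv_noninc (fun e e' e0 ee' => htop_noninc cpt cT e0 ee').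
have -> : htop T = ereal_sup (htop_eps T @` I) by rewrite /htop (cvg_lim _ cH).
have AH : (ereal_sup (Asc T @` I) <= ereal_sup (htop_eps T @` I))%E.
  apply: ge_ereal_sup => _ [e /pos_itv e0 <-].
  apply: le_trans (Asc_le_htop cpt cT e0) _.
  by apply: ereal_sup_ubound; exists e => //; exact: itv_pos.
have HA : (ereal_sup (htop_eps T @` I) <= ereal_sup (Asc T @` I))%E.
  apply: ge_ereal_sup => _ [e /pos_itv e0 <-].
  have e20 : 0 < e / 2 by rewrite divr_gt0.
  have -> : htop_eps T e = htop_eps T (e / 2 + e / 2) by rewrite -splitr.
  have [M HM] := htop_key cpt cT e20.
  apply/lee_addgt0Pr => eta eta0.
  pose k := (Num.truncn (2 * ln (M%:R : R) / eta)).+1.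
  have [del del0 Hdel] := HM k.
  apply: le_trans Hdel _; apply: leeD.
    by apply: ereal_sup_ubound; exists del => //; exact: itv_pos.
  rewrite lee_fin.
  have hk : 2 * ln (M%:R : R) / eta < k%:R := Num.Theory.truncnS_gt _.
  have k2 : (k%:R : R) <= 2%:R ^+ k by rewrite -natrX ler_nat ltnW // ltn_expl.
  rewrite mulrA ler_pdivrMr ?exprn_gt0 //.
  rewrite ltr_pdivrMr // in hk.
  rewrite mulrC; apply: le_trans (ltW hk) _; rewrite mulrC.
  by apply: ler_wpM2l; [exact: ltW | exact: k2].
have A'A : (ereal_sup (Asc' T @` I) <= ereal_sup (Asc T @` I))%E.
  apply: ge_ereal_sup => _ [e /pos_itv e0 <-].
  have e20 : 0 < e / 2 by rewrite divr_gt0.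
  have -> : Asc' T e = Asc' T (e / 2 + e / 2) by rewrite -splitr.
  apply: le_trans (Asc'_le_Asc cpt cT e20) _.
  by apply: ereal_sup_ubound; exists (e / 2) => //; exact: itv_pos.
have AA' : (ereal_sup (Asc T @` I) <= ereal_sup (Asc' T @` I))%E.
  apply: ge_ereal_sup => _ [e /pos_itv e0 <-].
  apply: le_trans (Asc_le_Asc' cpt cT e0) _.
  by apply: ereal_sup_ubound; exists e => //; exact: itv_pos.
have eA : ereal_sup (Asc T @` I) = ereal_sup (htop_eps T @` I) by apply/eqP; rewrite eq_le AH HA.
have eA' : ereal_sup (Asc' T @` I) = ereal_sup (htop_eps T @` I).
  by apply/eqP; rewrite eq_le (le_trans A'A AH) (le_trans HA AA').
by split; [rewrite -eA | rewrite -eA'].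
Qed.
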